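(* For every $\mathcal{L}_{A_m}^{\Box}$-formula $\varphi$: if $\varphi$ is derivable in the axiom system $\mathsf{K(A_m)}$, then $\varphi$ is $\mathsf{K(A)}$-valid.
   Context: $\mathcal{L}_{A_m}^{\Box}$-formulas are built from a countably infinite set $\mathrm{Var}$ of variables using binary $\to$ and unary $\Box$. Fix $p_0\in\mathrm{Var}$ and define $\overline{0}:=p_0\to p_0$, $\neg\varphi:=\varphi\to\overline{0}$, $\varphi\&\psi:=\neg\varphi\to\psi$, $0\varphi:=\overline{0}$, $(n+1)\varphi:=\varphi\&(n\varphi)$. A $\mathsf{K(A)}$-model $\langle W,R,V\rangle$: nonempty $W$, $R\subseteq W\times W$, $V\colon\mathrm{Var}\times W\to[-r,r]$ for some real $r\ge0$, extended by $V(\varphi\to\psi,x)=V(\psi,x)-V(\varphi,x)$ and $V(\Box\varphi,x)=\inf_{\mathbb{R}}\{V(\varphi,y):Rxy\}$ (empty infimum $=0$). $\varphi$ is $\mathsf{K(A)}$-valid if $V(\varphi,x)\ge0$ for all models and worlds. The axiom system $\mathsf{K(A_m)}$ has axiom schemas (B) $(\varphi\to\psi)\to((\psi\to\chi)\to(\varphi\to\chi))$; (C) $(\varphi\to(\psi\to\chi))\to(\psi\to(\varphi\to\chi))$; (I) $\varphi\to\varphi$; (A) $((\varphi\to\psi)\to\psi)\to\varphi$; (K) $\Box(\varphi\to\psi)\to(\Box\varphi\to\Box\psi)$; (D$_n$) $\Box(n\varphi)\to n\Box\varphi$ for $n\ge2$; and rules (mp) from $\varphi$ and $\varphi\to\psi$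 infer $\psi$; (nec) from $\varphi$ infer $\Box\varphi$; (con$_n$) from $n\varphi$ infer $\varphi$ for $n\ge2$. Derivations are finite sequences of formulas, each an axiom instance or obtained from earlier ones by a rule. *)

(* Defs.v *)
From Stdlib Require Import Reals Classical ClassicalEpsilon.
Open Scope R_scope.

Inductive form : Type :=
| Var : nat -> form
| Imp : form -> form -> form
| Box : form -> form.

Definition p0 : form := Var 0.
Definition zero : form := Imp p0 p0.
Definition Neg (a : form) : form := Imp a zero.
Definition Fus (a b : form) : form := Imp (Neg a) b.
Fixpoint mult (n : nat) (a : form) : form :=
  match n with
  | O => zero
  | S k => Fus a (mult k a)
  end.

Definition is_lower_bound (S : R -> Prop) (m : R) : Prop := forall x, S x -> m <= x.
Definition is_glb (S : R -> Prop) (m : R) : Prop :=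
  is_lower_bound S m /\ forall b, is_lower_bound S b -> b <= m.

(* inf_R S, with the convention inf of the empty set = 0.
   (For nonempty S bounded below this is the true infimum; on the values
   arising in K(A)-models the sets are always bounded.) *)
Definition Rinf (S : R -> Prop) : R :=
  epsilon (inhabits 0%R)
    (fun m => ((forall x, ~ S x) /\ m = 0) \/ ((exists x, S x) /\ is_glb S m)).

Record model : Type := {
  W : Type;
  W_inh : inhabited W;
  Rel : W -> W -> Prop;
  V0 : nat -> W -> R;
  bound : R;
  bound_ge0 : 0 <= bound;
  V0_bounded : forall p x, - bound <= V0 p x <= bound
}.

Fixpoint eval (M : model) (a : form) (x : W M) : R :=
  match a with
  | Var p => V0 M p x
  | Imp a b => eval M b x - eval M a x
  | Box a => Rinf (fun v => exists y, Rel M x y /\ v = eval M a y)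
  end.

Definition KA_valid (a : form) : Prop :=
  forall (M : model) (x : W M), 0 <= eval M a x.

Inductive KAm_derivable : form -> Prop :=
| ax_B a b c : KAm_derivable (Imp (Imp a b) (Imp (Imp b c) (Imp a c)))
| ax_C a b c : KAm_derivable (Imp (Imp a (Imp b c)) (Imp b (Imp a c)))
| ax_I a : KAm_derivable (Imp a a)
| ax_A a b : KAm_derivable (Imp (Imp (Imp a b) b) a)
| ax_K a b : KAm_derivable (Imp (Box (Imp a b)) (Imp (Box a) (Box b)))
| ax_D n a : (2 <= n)%nat -> KAm_derivable (Imp (Box (mult n a)) (mult n (Box a)))
| r_mp a b : KAm_derivable a -> KAm_derivable (Imp a b) -> KAm_derivable b
| r_nec a : KAm_derivable a -> KAm_derivable (Box a)
| r_con n a : (2 <= n)%nat -> KAm_derivable (mult n a) -> KAm_derivable a.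

(* Main.v *)
Require Import Defs.
From Stdlib Require Import Reals Lra Lia Classical ClassicalEpsilon.
Open Scope R_scope.

Lemma Rabs_le_between (a b : R) : Rabs a <= b -> - b <= a <= b.
Proof. intros H. unfold Rabs in H. destruct (Rcase_abs a); lra. Qed.

Lemma glb_exists (S : R -> Prop) :
  (exists m, is_lower_bound S m) -> (exists x, S x) -> exists g, is_glb S g.
Proof.
  intros [m Hm] [x Hx].
  destruct (completeness (fun y => S (- y))) as [l [Hl1 Hl2]].
  - exists (- m). intros y Hy. apply Hm in Hy. lra.
  - exists (- x). rewrite Ropp_involutive. exact Hx.
  - exists (- l). split.
    + intros z Hz. assert (- z <= l). { apply Hl1. rewrite Ropp_involutive. exact Hz. } lra.
    + intros b Hb. assert (l <= - b). { apply Hl2. intros y Hy. apply Hb in Hy. lra. } lra.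
Qed.

Lemma Rinf_spec (S : R -> Prop) : (exists m, is_lower_bound S m) ->
  ((forall x, ~ S x) /\ Rinf S = 0) \/ ((exists x, S x) /\ is_glb S (Rinf S)).
Proof.
  intros Hb. unfold Rinf. apply epsilon_spec.
  destruct (classic (exists x, S x)) as [Hne | Hno].
  - destruct (glb_exists S Hb Hne) as [g Hg]. exists g. right. auto.
  - exists 0. left. split; auto. intros x Hx. apply Hno. eauto.
Qed.

Definition Sx (M : model) (a : form) (x : W M) : R -> Prop :=
  fun v => exists y, Rel M x y /\ v = eval M a y.

Lemma eval_bounded (M : model) (a : form) :
  exists c, 0 <= c /\ forall x, Rabs (eval M a x) <= c.
Proof.
  induction a as [p | a IHa b IHb | a IHa]; simpl.
  - exists (Defs.bound M). split. apply bound_ge0. intros x.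
    pose proof (V0_bounded M p x). apply Rabs_le. lra.
  - destruct IHa as [c1 [H1 H1']]. destruct IHb as [c2 [H2 H2']].
    exists (c1 + c2). split. lra. intros x.
    specialize (H1' x). specialize (H2' x).
    apply Rabs_le. apply Rabs_le_between in H1'. apply Rabs_le_between in H2'. lra.
  - destruct IHa as [c [Hc Hc']]. exists c. split. exact Hc. intros x.
    destruct (Rinf_spec (Sx M a x)) as [[_ E] | [[v [y [Hy Hv]]] [Hg1 Hg2]]].
    + exists (- c). intros v [y [_ Hv]]. subst v. specialize (Hc' y).
      apply Rabs_le_between in Hc'. lra.
    + unfold Sx in E. rewrite E. rewrite Rabs_R0. exact Hc.
    + apply Rabs_le.
      assert (- c <= Rinf (Sx M a x)).
      { apply Hg2. intros w [z [_ Hw]]. subst w. specialize (Hc' z).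
        apply Rabs_le_between in Hc'. lra. }
      assert (Rinf (Sx M a x) <= v). { apply Hg1. exists y. auto. }
      subst v. specialize (Hc' y). apply Rabs_le_between in Hc'. unfold Sx in *. lra.
Qed.

Lemma box_spec (M : model) (a : form) (x : W M) :
  ((forall v, ~ Sx M a x v) /\ eval M (Box a) x = 0) \/
  ((exists v, Sx M a x v) /\ is_glb (Sx M a x) (eval M (Box a) x)).
Proof.
  simpl. apply Rinf_spec.
  destruct (eval_bounded M a) as [c [_ Hc]]. exists (- c).
  intros v [y [_ Hv]]. subst v. specialize (Hc y). apply Rabs_le_between in Hc. lra.
Qed.

Lemma eval_mult M n a x : eval M (mult n a) x = INR n * eval M a x.
Proof.
  induction n as [|n IH].
  - simpl. lra.
  - rewrite S_INR. simpl. rewrite IH. lra.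
Qed.

Theorem proposition4p1 : forall phi : form, KAm_derivable phi -> KA_valid phi.
Proof.
  intros phi H. induction H; intros M x; simpl.
  - lra.
  - lra.
  - lra.
  - lra.
  -
    change (0 <= (eval M (Box b) x - eval M (Box a) x) - eval M (Box (Imp a b)) x).
    destruct (box_spec M a x) as [[Ea Ra] | [Ea [Ga1 Ga2]]];
    destruct (box_spec M b x) as [[Eb Rb] | [Eb [Gb1 Gb2]]];
    destruct (box_spec M (Imp a b) x) as [[Ec Rc] | [Ec [Gc1 Gc2]]];
    try (rewrite Ra); try (rewrite Rb); try (rewrite Rc);
    try (destruct Ea as [v [y [Hy _]]]; exfalso; first [apply (Eb (eval M b y)) | apply (Ec (eval M (Imp a b) y))]; exists y; auto; fail);
    try (destruct Eb as [v [y [Hy _]]]; exfalso; first [apply (Ea (eval M a y)) | apply (Ec (eval M (Imp a b) y))]; exists y; auto; fail);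
    try (destruct Ec as [v [y [Hy _]]]; exfalso; first [apply (Ea (eval M a y)) | apply (Eb (eval M b y))]; exists y; auto; fail);
    try lra.
    assert (eval M (Box a) x + eval M (Box (Imp a b)) x <= eval M (Box b) x).
    { apply Gb2. intros w [y [Hy Hw]]. subst w.
      assert (eval M (Box a) x <= eval M a y) by (apply Ga1; exists y; auto).
      assert (eval M (Box (Imp a b)) x <= eval M b y - eval M a y) by (apply Gc1; exists y; auto).
      lra. }
    lra.
  -
    change (0 <= eval M (mult n (Box a)) x - eval M (Box (mult n a)) x).
    rewrite eval_mult.
    assert (Hn : 0 < INR n) by (apply lt_0_INR; lia).
    destruct (box_spec M a x) as [[Ea Ra] | [Ea [Ga1 Ga2]]];
    destruct (box_spec M (mult n a) x) as [[Eb Rb] | [Eb [Gb1 Gb2]]].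
    + rewrite Ra, Rb. lra.
    + destruct Eb as [v [y [Hy _]]]. exfalso. apply (Ea (eval M a y)). exists y; auto.
    + destruct Ea as [v [y [Hy _]]]. exfalso. apply (Eb (eval M (mult n a) y)). exists y; auto.
    + set (ia := eval M (Box a) x) in *.
      set (ib := eval M (Box (mult n a)) x) in *.
      assert (ib / INR n <= ia).
      { apply Ga2. intros w [y [Hy Hw]]. subst w.
        assert (ib <= eval M (mult n a) y) by (apply Gb1; exists y; auto).
        rewrite eval_mult in H0.
        apply (Rmult_le_reg_l (INR n)); auto.
        replace (INR n * (ib / INR n)) with ib by (field; lra). exact H0. }
      assert (ib <= INR n * ia).
      { apply (Rmult_le_compat_l (INR n)) in H0; [|lra].
        replace (INR n * (ib / INR n)) with ib in H0 by (field; lra). exact H0. }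
      lra.
  - specialize (IHKAm_derivable1 M x). specialize (IHKAm_derivable2 M x).
    simpl in IHKAm_derivable2. lra.
  - destruct (box_spec M a x) as [[Ea Ra] | [Ea [Ga1 Ga2]]]; simpl in *.
    + rewrite Ra. lra.
    + apply Ga2. intros w [y [Hy Hw]]. subst w. apply IHKAm_derivable.
  - specialize (IHKAm_derivable M x). rewrite eval_mult in IHKAm_derivable.
    assert (Hn : 0 < INR n) by (apply lt_0_INR; lia).
    destruct (Rle_or_lt 0 (eval M a x)); auto.
    assert (INR n * eval M a x < 0). { apply Rmult_pos_neg; lra. } lra.
Qed.
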